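(* Let $\mathfrak{X}$ be a Hilbert space, $M\subset\mathfrak{X}$ a finite-dimensional subspace and $\pi_M$ the orthogonal projection of $\mathfrak{X}$ onto $M$. Let $\Gamma$ and $\Gamma(\varepsilon)$, $\varepsilon>0$, be positive operators on $\mathfrak{X}$ such that $\lim_{\varepsilon\to0^+}\|\Gamma(\varepsilon)h-\Gamma h\|=0$ for every $h\in\mathfrak{X}$. Then for every sequence $\varepsilon_n>0$ with $\varepsilon_n\to0$, $$\lim_{n\to\infty}\big\|\varepsilon_n(\varepsilon_nI+\Gamma(\varepsilon_n))^{-1}\pi_M\big\|_{L(\mathfrak{X})}=0.$$
   Context: An operator $\Gamma\in L(\mathfrak{X})$ is called positive if it is bounded, self-adjoint and $\langle\Gamma x,x\rangle>0$ for all $x\neq0$; it is called nonnegative if it is bounded, self-adjoint and $\langle \Gamma x,x\rangle\ge0$ for all $x$. *)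

(* Defs.v *)
From Stdlib Require Import Reals Lra List Classical ClassicalEpsilon.
Open Scope R_scope.

Record Hilbert := {
  hcar :> Type;
  hzero : hcar;
  hadd : hcar -> hcar -> hcar;
  hopp : hcar -> hcar;
  hscal : R -> hcar -> hcar;
  hinner : hcar -> hcar -> R;
  hadd_assoc : forall x y z, hadd x (hadd y z) = hadd (hadd x y) z;
  hadd_comm : forall x y, hadd x y = hadd y x;
  hadd_0 : forall x, hadd x hzero = x;
  hadd_opp : forall x, hadd x (hopp x) = hzero;
  hscal_assoc : forall a b x, hscal a (hscal b x) = hscal (a * b) x;
  hscal_1 : forall x, hscal 1 x = x;
  hscal_distr_l : forall a x y, hscal a (hadd x y) = hadd (hscal a x) (hscal a y);
  hscal_distr_r : forall a b x, hscal (a + b) x = hadd (hscal a x) (hscal b x);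
  hinner_sym : forall x y, hinner x y = hinner y x;
  hinner_add_l : forall x y z, hinner (hadd x y) z = hinner x z + hinner y z;
  hinner_scal_l : forall a x y, hinner (hscal a x) y = a * hinner x y;
  hinner_nonneg : forall x, 0 <= hinner x x;
  hinner_def : forall x, hinner x x = 0 -> x = hzero;
  hcomplete : forall u : nat -> hcar,
    (forall e, 0 < e -> exists N, forall m n, (N <= m)%nat -> (N <= n)%nat ->
        sqrt (hinner (hadd (u m) (hopp (u n))) (hadd (u m) (hopp (u n)))) < e) ->
    exists l, forall e, 0 < e -> exists N, forall n, (N <= n)%nat ->
        sqrt (hinner (hadd (u n) (hopp l)) (hadd (u n) (hopp l))) < e
}.

Section Ops.
Variable X : Hilbert.

Definition hnorm (x : X) : R := sqrt (hinner X x x).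
Definition hsub (x y : X) : X := hadd X x (hopp X y).

Definition is_linear (T : X -> X) : Prop :=
  (forall x y, T (hadd X x y) = hadd X (T x) (T y)) /\
  (forall a x, T (hscal X a x) = hscal X a (T x)).

Definition is_bounded (T : X -> X) : Prop :=
  is_linear T /\ exists C, forall x, hnorm (T x) <= C * hnorm x.

Definition self_adjoint (T : X -> X) : Prop :=
  forall x y, hinner X (T x) y = hinner X x (T y).

Definition positive_op (T : X -> X) : Prop :=
  is_bounded T /\ self_adjoint T /\
  forall x, x <> hzero X -> 0 < hinner X (T x) x.

Fixpoint in_span (l : list X) (x : X) : Prop :=
  match l with
  | nil => x = hzero X
  | v :: l' => exists a y, in_span l' y /\ x = hadd X (hscal X a v) y
  end.

Definition fin_dim_subspace (M : X -> Prop) : Prop :=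
  exists l : list X, forall x, M x <-> in_span l x.

Definition orth_proj (M : X -> Prop) (h : X) : X :=
  epsilon (inhabits (hzero X))
    (fun m => M m /\ forall u, M u -> hinner X (hsub h m) u = 0).

Definition inv_op (A : X -> X) (y : X) : X :=
  epsilon (inhabits (hzero X)) (fun x => A x = y).

Definition id_op : X -> X := fun x => x.

Definition op_norm (T : X -> X) : R :=
  epsilon (inhabits 0)
    (is_lub (fun r => exists h, hnorm h <= 1 /\ r = hnorm (T h))).

End Ops.

Arguments hnorm {X}.
Arguments hsub {X}.
Arguments is_bounded {X}.
Arguments positive_op {X}.
Arguments fin_dim_subspace {X}.
Arguments orth_proj {X}.
Arguments inv_op {X}.
Arguments op_norm {X}.

(* Main.v *)
Require Import Defs.
From Stdlib Require Import Reals Lra Psatz Classical ClassicalEpsilon List.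
Open Scope R_scope.

Lemma inner_zero_l (X : Hilbert) (y : X) : hinner X (hzero X) y = 0.
Proof.
  pose proof (hinner_add_l X (hzero X) (hzero X) y) as H.
  rewrite hadd_0 in H. lra.
Qed.

Lemma inner_opp_l (X : Hilbert) (x y : X) : hinner X (hopp X x) y = - hinner X x y.
Proof.
  pose proof (hinner_add_l X x (hopp X x) y) as H.
  rewrite hadd_opp, inner_zero_l in H. lra.
Qed.

Lemma inner_add_r (X : Hilbert) (x y z : X) :
  hinner X x (hadd X y z) = hinner X x y + hinner X x z.
Proof. rewrite hinner_sym, hinner_add_l, (hinner_sym X y), (hinner_sym X z). reflexivity. Qed.

Lemma inner_scal_r (X : Hilbert) a (x y : X) :
  hinner X x (hscal X a y) = a * hinner X x y.
Proof. rewrite hinner_sym, hinner_scal_l, (hinner_sym X y). reflexivity. Qed.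

Lemma inner_opp_r (X : Hilbert) (x y : X) : hinner X x (hopp X y) = - hinner X x y.
Proof. rewrite hinner_sym, inner_opp_l, (hinner_sym X y). reflexivity. Qed.

Lemma inner_zero_r (X : Hilbert) (y : X) : hinner X y (hzero X) = 0.
Proof. rewrite hinner_sym. apply inner_zero_l. Qed.

Lemma inner_sub_l (X : Hilbert) (x y z : X) :
  hinner X (hsub x y) z = hinner X x z - hinner X y z.
Proof. unfold hsub. rewrite hinner_add_l, inner_opp_l. ring. Qed.

Lemma inner_sub_r (X : Hilbert) (x y z : X) :
  hinner X z (hsub x y) = hinner X z x - hinner X z y.
Proof. unfold hsub. rewrite inner_add_r, inner_opp_r. ring. Qed.

Ltac inner_simpl := repeat (rewrite ?hinner_add_l, ?hinner_scal_l, ?inner_opp_l,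
  ?inner_zero_l, ?inner_add_r, ?inner_scal_r, ?inner_opp_r, ?inner_zero_r,
  ?inner_sub_l, ?inner_sub_r).

Lemma add_cancel_zero (X : Hilbert) (x y : X) : hadd X x (hopp X y) = hzero X -> x = y.
Proof. intro H.
  rewrite <- (hadd_0 X x), <- (hadd_opp X y), (hadd_comm X y), hadd_assoc, H,
    hadd_comm, hadd_0. reflexivity. Qed.

Lemma ext (X : Hilbert) (x y : X) : (forall z, hinner X x z = hinner X y z) -> x = y.
Proof. intro H. apply add_cancel_zero. apply hinner_def.
  rewrite hinner_add_l, inner_opp_l, H. ring. Qed.

Ltac inner_simpl_in H := repeat (rewrite ?hinner_add_l, ?hinner_scal_l, ?inner_opp_l,
  ?inner_zero_l, ?inner_add_r, ?inner_scal_r, ?inner_opp_r, ?inner_zero_r,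
  ?inner_sub_l, ?inner_sub_r in H).

Ltac vext := apply ext; intro; inner_simpl; ring.

Lemma opp_scal (X : Hilbert) (x : X) : hopp X x = hscal X (-1) x.
Proof. vext. Qed.

Lemma lin_opp (X : Hilbert) (A : X -> X) : is_linear X A -> forall x, A (hopp X x) = hopp X (A x).
Proof. intros [_ H2] x. rewrite !opp_scal, H2. reflexivity. Qed.

Lemma lin_sub (X : Hilbert) (A : X -> X) : is_linear X A -> forall x y, A (hsub x y) = hsub (A x) (A y).
Proof. intros HA x y. unfold hsub. rewrite (proj1 HA), lin_opp; auto. Qed.

Lemma lin_zero (X : Hilbert) (A : X -> X) : is_linear X A -> A (hzero X) = hzero X.
Proof. intros [_ H2]. replace (hzero X) with (hscal X 0 (hzero X)) by vext.
  rewrite H2. vext. Qed.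

Lemma Q_nonneg (X : Hilbert) (x : X) : 0 <= hinner X x x.
Proof. apply hinner_nonneg. Qed.

Lemma norm_nonneg (X : Hilbert) (x : X) : 0 <= hnorm x.
Proof. apply sqrt_pos. Qed.

Lemma norm_sq (X : Hilbert) (x : X) : hnorm x * hnorm x = hinner X x x.
Proof. apply sqrt_sqrt, hinner_nonneg. Qed.

Lemma norm_le_of_sq (X : Hilbert) (x : X) b : 0 <= b -> hinner X x x <= b * b -> hnorm x <= b.
Proof. intros Hb H. unfold hnorm. rewrite <- (sqrt_square b Hb). apply sqrt_le_1_alt; auto. Qed.

Lemma norm_lt_of_sq (X : Hilbert) (x : X) b : 0 <= b -> hinner X x x < b * b -> hnorm x < b.
Proof. intros Hb H. unfold hnorm. rewrite <- (sqrt_square b Hb). apply sqrt_lt_1_alt.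
  split; auto using hinner_nonneg. Qed.

Lemma Q_le_of_norm (X : Hilbert) (x : X) b : hnorm x <= b -> hinner X x x <= b * b.
Proof. intro H. rewrite <- norm_sq. pose proof (norm_nonneg X x). nra. Qed.

Lemma Q_zero (X : Hilbert) (x : X) : hinner X x x = 0 -> x = hzero X.
Proof. apply hinner_def. Qed.

Lemma norm_zero (X : Hilbert) : hnorm (hzero X) = 0.
Proof. unfold hnorm. rewrite inner_zero_l. apply sqrt_0. Qed.

Lemma CS (X : Hilbert) (x y : X) : hinner X x y * hinner X x y <= hinner X x x * hinner X y y.
Proof.
  destruct (Req_dec (hinner X y y) 0) as [H0|H0].
  - apply Q_zero in H0. rewrite H0, !inner_zero_r. pose proof (Q_nonneg X x). nra.
  - pose proof (Q_nonneg X y) as Hq.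
    set (a := hinner X x y). set (q := hinner X y y).
    set (t := - a / q).
    pose proof (Q_nonneg X (hadd X x (hscal X t y))) as H.
    rewrite ?hinner_add_l, ?hinner_scal_l, ?inner_add_r, ?inner_scal_r in H.
    rewrite (hinner_sym X y x) in H. fold a q in H.
    assert (Htq : t * q = - a) by (unfold t; field; auto).
    assert (0 < q) by (unfold q in *; lra).
    assert (0 <= q * (hinner X x x + t * a + t * (a + t * q))) by (apply Rmult_le_pos; lra).
    nra.
Qed.

Lemma CS_abs (X : Hilbert) (x y : X) : Rabs (hinner X x y) <= hnorm x * hnorm y.
Proof.
  pose proof (CS X x y). rewrite <- (norm_sq X x), <- (norm_sq X y) in H.
  pose proof (norm_nonneg X x). pose proof (norm_nonneg X y).
  set (p := hnorm x * hnorm y) in *. set (a := hinner X x y) in *.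
  assert (a * a <= p * p) by (unfold p; nra).
  assert (0 <= p) by (unfold p; nra).
  apply Rabs_le. split; nra.
Qed.

Lemma CS_le (X : Hilbert) (x y : X) : hinner X x y <= hnorm x * hnorm y.
Proof. pose proof (CS_abs X x y). pose proof (Rle_abs (hinner X x y)). lra. Qed.

Lemma norm_triang (X : Hilbert) (x y : X) : hnorm (hadd X x y) <= hnorm x + hnorm y.
Proof.
  apply norm_le_of_sq. pose proof (norm_nonneg X x). pose proof (norm_nonneg X y). lra.
  inner_simpl. pose proof (CS_le X x y). rewrite (hinner_sym X y x).
  rewrite <- (norm_sq X x), <- (norm_sq X y). nra.
Qed.

Lemma norm_scal (X : Hilbert) a (x : X) : hnorm (hscal X a x) = Rabs a * hnorm x.
Proof.
  unfold hnorm. inner_simpl. rewrite <- Rmult_assoc.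
  rewrite sqrt_mult_alt. rewrite <- sqrt_Rsqr_abs. reflexivity.
  pose proof (Rle_0_sqr a). unfold Rsqr in *. lra.
Qed.

Lemma norm_opp (X : Hilbert) (x : X) : hnorm (hopp X x) = hnorm x.
Proof. rewrite opp_scal, norm_scal. rewrite Rabs_left by lra. ring. Qed.

Lemma norm_sub_sym (X : Hilbert) (x y : X) : hnorm (hsub x y) = hnorm (hsub y x).
Proof. replace (hsub x y) with (hopp X (hsub y x)) by vext. apply norm_opp. Qed.

Lemma norm_sub_triang (X : Hilbert) (x y z : X) : hnorm (hsub x z) <= hnorm (hsub x y) + hnorm (hsub y z).
Proof. replace (hsub x z) with (hadd X (hsub x y) (hsub y z)) by vext. apply norm_triang. Qed.

Lemma span_zero (X : Hilbert) (l : list X) : in_span X l (hzero X).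
Proof. induction l as [|v l IH]; simpl; auto.
  exists 0, (hzero X). split; auto. vext. Qed.

Lemma span_add (X : Hilbert) (l : list X) x y :
  in_span X l x -> in_span X l y -> in_span X l (hadd X x y).
Proof. revert x y. induction l as [|v l IH]; simpl; intros x y Hx Hy.
  - rewrite Hx, Hy, hadd_0. reflexivity.
  - destruct Hx as [a [x' [Hx' ->]]]. destruct Hy as [b [y' [Hy' ->]]].
    exists (a + b), (hadd X x' y'). split; auto. vext. Qed.

Lemma span_scal (X : Hilbert) (l : list X) c x :
  in_span X l x -> in_span X l (hscal X c x).
Proof. revert x. induction l as [|v l IH]; simpl; intros x Hx.
  - rewrite Hx. vext.
  - destruct Hx as [a [x' [Hx' ->]]].
    exists (c * a), (hscal X c x'). split; auto. vext. Qed.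

Lemma span_cons (X : Hilbert) (l : list X) v y : in_span X l y -> in_span X (v :: l) y.
Proof. intro H. simpl. exists 0, y. split; auto. vext. Qed.

Lemma proj_exists (X : Hilbert) (l : list X) (h : X) :
  exists m, in_span X l m /\ forall u, in_span X l u -> hinner X (hsub h m) u = 0.
Proof.
  revert h. induction l as [|v l IH]; intro h.
  - exists (hzero X). split. reflexivity. intros u Hu. simpl in Hu. rewrite Hu. apply inner_zero_r.
  - destruct (IH h) as [m' [Hm' Om']]. destruct (IH v) as [p [Hp Op]].
    set (w := hsub v p) in *. set (g := hsub h m') in *.
    destruct (Req_dec (hinner X w w) 0) as [Hw|Hw].
    + apply Q_zero in Hw.
      assert (Hvp : v = p). { apply add_cancel_zero. exact Hw. }
      exists m'. split. apply span_cons; auto.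
      intros u [a [y [Hy ->]]]. fold g. inner_simpl. rewrite (Om' y Hy). rewrite Hvp, (Om' p Hp). ring.
    + set (c := hinner X g w / hinner X w w).
      exists (hadd X m' (hscal X c w)). split.
      * replace (hadd X m' (hscal X c w)) with (hadd X (hscal X c v) (hadd X m' (hscal X (-c) p)))
          by (unfold w; vext).
        simpl. exists c, (hadd X m' (hscal X (-c) p)). split; auto.
        apply span_add; auto. apply span_scal; auto.
      * intros u [a [y [Hy ->]]].
        replace (hsub h (hadd X m' (hscal X c w))) with (hadd X g (hscal X (-c) w)) by (unfold g; vext).
        replace (hadd X (hscal X a v) y) with (hadd X (hscal X a w) (hadd X (hscal X a p) y))
          by (unfold w; vext).
        clearbody w g. inner_simpl.
        rewrite (Om' y), (Om' p), (Op y), (Op p) by auto.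
        unfold c. field. auto.
Qed.

Lemma orth_proj_spec (X : Hilbert) (M : X -> Prop) (HM : fin_dim_subspace M) (h : X) :
  M (orth_proj M h) /\ forall u, M u -> hinner X (hsub h (orth_proj M h)) u = 0.
Proof.
  unfold orth_proj. apply epsilon_spec.
  destruct HM as [l Hl]. destruct (proj_exists X l h) as [m [Hm Om]].
  exists m. split. apply Hl; auto. intros u Hu. apply Om, Hl; auto.
Qed.

Lemma orth_proj_norm (X : Hilbert) (M : X -> Prop) (HM : fin_dim_subspace M) (h : X) :
  hnorm (orth_proj M h) <= hnorm h.
Proof.
  destruct (orth_proj_spec X M HM h) as [Hp Op].
  set (p := orth_proj M h) in *. clearbody p.
  pose proof (Op p Hp) as E. inner_simpl_in E.
  pose proof (Q_nonneg X (hsub h p)) as Q. inner_simpl_in Q.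
  rewrite (hinner_sym X p h) in Q.
  apply norm_le_of_sq. apply norm_nonneg. rewrite norm_sq. lra.
Qed.

Definition hlim (X : Hilbert) (u : nat -> X) (l : X) : Prop :=
  forall e, 0 < e -> exists N, forall n, (N <= n)%nat -> hnorm (hsub (u n) l) < e.

Lemma min_lemma (X : Hilbert) (V : X -> Prop) (A : X -> X) (b : X) (c K : R) :
  V (hzero X) -> (forall x y, V x -> V y -> V (hadd X x y)) ->
  (forall a x, V x -> V (hscal X a x)) ->
  (forall u l, (forall k, V (u k)) -> hlim X u l -> V l) ->
  is_linear X A -> (forall x y, hinner X (A x) y = hinner X x (A y)) ->
  0 < c -> (forall z, c * hinner X z z <= hinner X (A z) z) ->
  (forall z, hnorm (A z) <= K * hnorm z) ->
  exists x, V x /\ forall z, V z -> hinner X (A x) z = hinner X b z.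
Proof.
  intros V0 Vadd Vscal Vlim HA Hsym Hc Hcoer HK.
  destruct HA as [HAadd HAscal].
  assert (Hs : forall x y, hinner X (A x) y = hinner X (A y) x).
  { intros x y. rewrite Hsym, hinner_sym. reflexivity. }
  set (F := fun x => hinner X (A x) x - 2 * hinner X b x).
  set (S := fun r => exists x, V x /\ r = - F x).
  assert (Hbnd : bound S).
  { exists (hnorm b * hnorm b / c). intros r [x [_ ->]].
    unfold F. pose proof (CS_le X b x). pose proof (Hcoer x).
    rewrite <- norm_sq in H0. pose proof (norm_nonneg X x). pose proof (norm_nonneg X b).
    apply (Rmult_le_reg_l c); auto.
    replace (c * (hnorm b * hnorm b / c)) with (hnorm b * hnorm b) by (field; lra).
    assert (c * hinner X b x <= c * (hnorm b * hnorm x)) by (apply Rmult_le_compat_l; lra).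
    assert (c * (c * (hnorm x * hnorm x)) <= c * hinner X (A x) x) by (apply Rmult_le_compat_l; lra).
    pose proof (Rle_0_sqr (c * hnorm x - hnorm b)). unfold Rsqr in *. nra. }
  destruct (completeness S Hbnd) as [s [Hs1 Hs2]].
  { exists (- F (hzero X)). exists (hzero X). auto. }
  set (d := - s).
  assert (Hd1 : forall x, V x -> d <= F x).
  { intros x Vx. assert (- F x <= s) by (apply Hs1; exists x; auto). unfold d; lra. }
  assert (Hd2 : forall eta, 0 < eta -> exists x, V x /\ F x < d + eta).
  { intros eta He. destruct (classic (exists x, V x /\ F x < d + eta)) as [H|H]; auto.
    exfalso. assert (s <= s - eta); [|lra].
    apply Hs2. intros r [x [Vx ->]]. 
    destruct (Rlt_le_dec (F x) (d + eta)) as [Hl|Hl].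
    - exfalso; apply H; exists x; auto.
    - unfold d in Hl. lra. }
  set (u := fun k : nat => epsilon (inhabits (hzero X))
                  (fun x => V x /\ F x < d + / (INR k + 1))).
  assert (Hu : forall k, V (u k) /\ F (u k) < d + / (INR k + 1)).
  { intro k. unfold u. apply epsilon_spec. apply Hd2.
    apply Rinv_0_lt_compat. pose proof (pos_INR k). lra. }
  assert (Hmid : forall x y, V x -> V y ->
     c / 2 * hinner X (hsub x y) (hsub x y) <= F x + F y - 2 * d).
  { intros x y Vx Vy.
    set (mm := hscal X (/2) (hadd X x y)).
    assert (Vm : V mm) by (apply Vscal, Vadd; auto).
    pose proof (Hd1 mm Vm) as Hm.
    pose proof (Hcoer (hsub x y)) as Hc2.
    assert (E : hinner X (A (hsub x y)) (hsub x y) = hinner X (A x) x + hinner X (A y) y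
               - 2 * hinner X (A x) y).
    { rewrite (lin_sub X A (conj HAadd HAscal)). inner_simpl. rewrite (Hs y x). ring. }
    rewrite E in Hc2. clear E.
    unfold F, mm in *. rewrite HAscal, HAadd in Hm.
    inner_simpl_in Hm. rewrite (Hs y x) in Hm. lra. }
  destruct (hcomplete X u) as [x Hx].
  { intros e He.
    destruct (archimed_cor1 (c * (e * e) / 4)) as [N [HN1 HN2]].
    { apply Rmult_lt_0_compat. apply Rmult_lt_0_compat; nra. lra. }
    exists N. intros j k Hj Hk.
    change (hnorm (hsub (u j) (u k)) < e).
    apply norm_lt_of_sq. lra.
    pose proof (Hmid (u j) (u k) (proj1 (Hu j)) (proj1 (Hu k))).
    pose proof (proj2 (Hu j)). pose proof (proj2 (Hu k)).
    assert (INR N <= INR j) by (apply le_INR; auto).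
    assert (INR N <= INR k) by (apply le_INR; auto).
    assert (0 < INR N) by (apply lt_0_INR; auto).
    assert (/ (INR j + 1) < / INR N) by (apply Rinv_lt_contravar; nra).
    assert (/ (INR k + 1) < / INR N) by (apply Rinv_lt_contravar; nra).
    assert (c / 2 * hinner X (hsub (u j) (u k)) (hsub (u j) (u k)) < c / 2 * (e * e)) by nra.
    apply (Rmult_lt_reg_l (c/2)); lra. }
  assert (Vx : V x) by (apply (Vlim u x); [intro k; apply Hu | exact Hx]).
  assert (Hcont : forall eta, 0 < eta -> exists rho, 0 < rho /\ forall y,
             hnorm (hsub y x) < rho -> Rabs (F y - F x) < eta).
  { intros eta Heta.
    set (B := Rabs K * (1 + 2 * hnorm x) + 2 * hnorm b + 1).
    assert (HB : 0 < B).
    { unfold B. pose proof (Rabs_pos K). pose proof (norm_nonneg X x).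
      pose proof (norm_nonneg X b). nra. }
    exists (Rmin 1 (eta / B)). split.
    { apply Rmin_glb_lt. lra. apply Rdiv_lt_0_compat; auto. }
    intros y Hy.
    assert (E : F y - F x = hinner X (A (hsub y x)) (hadd X y x) - 2 * hinner X b (hsub y x)).
    { unfold F. rewrite (lin_sub X A (conj HAadd HAscal)). inner_simpl.
      rewrite (Hs y x). ring. }
    rewrite E.
    set (r := hnorm (hsub y x)) in *.
    assert (Hr1 : r < 1) by (pose proof (Rmin_l 1 (eta/B)); lra).
    assert (Hr2 : r < eta / B) by (pose proof (Rmin_r 1 (eta/B)); lra).
    assert (Hr0 : 0 <= r) by apply norm_nonneg.
    assert (H1 : Rabs (hinner X (A (hsub y x)) (hadd X y x)) <= Rabs K * r * (1 + 2 * hnorm x)).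
    { eapply Rle_trans. apply CS_abs.
      assert (hnorm (A (hsub y x)) <= Rabs K * r).
      { eapply Rle_trans. apply HK. fold r. pose proof (Rle_abs K). nra. }
      assert (hnorm (hadd X y x) <= r + 2 * hnorm x).
      { replace (hadd X y x) with (hadd X (hsub y x) (hscal X 2 x)) by vext.
        eapply Rle_trans. apply norm_triang. rewrite norm_scal, Rabs_right by lra. fold r. lra. }
      pose proof (norm_nonneg X (A (hsub y x))). pose proof (norm_nonneg X (hadd X y x)).
      pose proof (Rabs_pos K).
      apply Rle_trans with (Rabs K * r * (r + 2 * hnorm x)). nra. nra. }
    assert (H2 : Rabs (2 * hinner X b (hsub y x)) <= 2 * hnorm b * r).
    { rewrite Rabs_mult, Rabs_right by lra. pose proof (CS_abs X b (hsub y x)). fold r in H. lra. }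
    eapply Rle_lt_trans. apply Rabs_triang. rewrite Rabs_Ropp.
    apply Rle_lt_trans with (r * B).
    { unfold B. nra. }
    apply (Rmult_lt_compat_r B) in Hr2; auto. unfold Rdiv in Hr2.
    rewrite Rmult_assoc, Rinv_l in Hr2 by lra. lra. }
  assert (HFx : F x <= d).
  { destruct (Rle_lt_dec (F x) d) as [H|H]; auto. exfalso.
    set (eta := F x - d).
    destruct (Hcont (eta / 2)) as [rho [Hrho Hc3]]. unfold eta; lra.
    destruct (Hx rho Hrho) as [N1 HN1].
    destruct (archimed_cor1 (eta / 2)) as [N2 [HN2 HN2']]. unfold eta; lra.
    set (k := max N1 N2).
    assert (Hk1 : (N1 <= k)%nat) by apply Nat.le_max_l.
    assert (Hk2 : (N2 <= k)%nat) by apply Nat.le_max_r.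
    pose proof (HN1 k Hk1) as H3. pose proof (Hc3 (u k) H3) as H4.
    pose proof (proj2 (Hu k)) as H5.
    assert (INR N2 <= INR k) by (apply le_INR; auto).
    assert (0 < INR N2) by (apply lt_0_INR; auto).
    assert (/ (INR k + 1) < / INR N2) by (apply Rinv_lt_contravar; nra).
    apply Rabs_def2 in H4. unfold eta in *. lra. }
  exists x. split; auto. intros z Vz.
  set (g := hinner X (A x) z - hinner X b z).
  set (a := hinner X (A z) z).
  assert (Ha : 0 <= a) by (pose proof (Hcoer z); pose proof (Q_nonneg X z); unfold a; nra).
  set (s' := / (a + 1)).
  assert (Hs' : 0 < s') by (apply Rinv_0_lt_compat; lra).
  assert (Hsa : s' * a = 1 - s') by (unfold s'; field; lra).
  set (t := - (s' * g)).
  assert (Ht : 0 <= 2 * t * g + t * t * a).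
  { pose proof (Hd1 (hadd X x (hscal X t z)) (Vadd _ _ Vx (Vscal _ _ Vz))) as H.
    unfold F in H, HFx. rewrite HAadd, HAscal in H. inner_simpl_in H.
    rewrite (Hs z x) in H. unfold g, a. lra. }
  assert (E : 2 * t * g + t * t * a = - (s' * g * g) * (1 + s')).
  { unfold t. replace (- (s' * g) * - (s' * g) * a) with (s' * g * g * (s' * a)) by ring.
    rewrite Hsa. ring. }
  rewrite E in Ht.
  assert (g * g <= 0) by nra.
  assert (g = 0) by nra. unfold g in H0. lra.
Qed.

Definition Aop (X : Hilbert) (e : R) (T : X -> X) : X -> X :=
  fun x => hadd X (hscal X e x) (T x).

Lemma pos_nonneg (X : Hilbert) (T : X -> X) : positive_op T -> forall x, 0 <= hinner X (T x) x.
Proof.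
  intros [_ [_ Hp]] x. destruct (classic (x = hzero X)) as [->|Hx].
  - rewrite inner_zero_r. lra.
  - apply Rlt_le, Hp; auto.
Qed.

Lemma Aop_linear (X : Hilbert) e T : positive_op T -> is_linear X (Aop X e T).
Proof.
  intros [[[H1 H2] _] _]. unfold Aop. split.
  - intros x y. rewrite H1. vext.
  - intros a x. rewrite H2. vext.
Qed.

Lemma Aop_coer (X : Hilbert) e T : positive_op T ->
  forall z, e * hinner X z z <= hinner X (Aop X e T z) z.
Proof. intros HT z. unfold Aop. inner_simpl. pose proof (pos_nonneg X T HT z). lra. Qed.

Lemma Aop_inj (X : Hilbert) e T : 0 < e -> positive_op T ->
  forall u v, Aop X e T u = Aop X e T v -> u = v.
Proof.
  intros He HT u v Huv. apply add_cancel_zero. apply Q_zero.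
  pose proof (Aop_coer X e T HT (hsub u v)) as H.
  rewrite (lin_sub X _ (Aop_linear X e T HT)), Huv in H.
  rewrite (inner_sub_l X (Aop X e T v)), Rminus_diag in H.
  pose proof (Q_nonneg X (hsub u v)).
  change (hinner X (hsub u v) (hsub u v) = 0).
  rewrite (inner_sub_l X u v) in H. rewrite <- (inner_sub_l X u v) in H.
  apply Rle_antisym; [|auto]. nra.
Qed.

Lemma Aop_inv (X : Hilbert) e T : 0 < e -> positive_op T ->
  forall m, Aop X e T (inv_op (Aop X e T) m) = m.
Proof.
  intros He HT m. unfold inv_op. apply epsilon_spec.
  pose proof HT as HT'. destruct HT' as [[HL [C HC]] [HS HP]].
  destruct (min_lemma X (fun _ => True) (Aop X e T) m e (e + C)) as [x [_ Hx]]; auto.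
  - apply Aop_linear; auto.
  - intros x y. unfold Aop. inner_simpl. rewrite HS. ring.
  - apply Aop_coer; auto.
  - intro z. unfold Aop. eapply Rle_trans. apply norm_triang.
    rewrite norm_scal, Rabs_right by lra. pose proof (HC z). lra.
  - exists x. apply ext. intro z. apply Hx. auto.
Qed.

Lemma inv_add (X : Hilbert) e T : 0 < e -> positive_op T -> forall x y,
  inv_op (Aop X e T) (hadd X x y) = hadd X (inv_op (Aop X e T) x) (inv_op (Aop X e T) y).
Proof.
  intros He HT x y. apply (Aop_inj X e T He HT).
  rewrite (proj1 (Aop_linear X e T HT)), !Aop_inv; auto.
Qed.

Lemma inv_scal (X : Hilbert) e T : 0 < e -> positive_op T -> forall a x,
  inv_op (Aop X e T) (hscal X a x) = hscal X a (inv_op (Aop X e T) x).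
Proof.
  intros He HT a x. apply (Aop_inj X e T He HT).
  rewrite (proj2 (Aop_linear X e T HT)), !Aop_inv; auto.
Qed.

Lemma density (X : Hilbert) (G : X -> X) : positive_op G ->
  forall m d, 0 < d -> exists z, hnorm (hsub m (G z)) < d.
Proof.
  intros HG. pose proof HG as HG'. destruct HG' as [[[HL1 HL2] _] [HS HP]].
  set (V := fun x => forall d, 0 < d -> exists z, hnorm (hsub x (G z)) < d).
  assert (HGl : is_linear X G) by (split; auto).
  assert (HGV : forall z, V (G z)).
  { intros z d Hd. exists z. replace (hsub (G z) (G z)) with (hzero X) by vext.
    rewrite norm_zero. auto. }
  intro m.
  destruct (min_lemma X V (fun x => x) m 1 1) as [x [Vx Hx]].
  - rewrite <- (lin_zero X G HGl). apply HGV.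
  - intros x y Vx Vy d Hd. destruct (Vx (d/2)) as [z1 H1]. lra.
    destruct (Vy (d/2)) as [z2 H2]. lra. exists (hadd X z1 z2).
    rewrite HL1. replace (hsub (hadd X x y) (hadd X (G z1) (G z2)))
      with (hadd X (hsub x (G z1)) (hsub y (G z2))) by vext.
    eapply Rle_lt_trans. apply norm_triang. lra.
  - intros a x Vx d Hd. destruct (Vx (d / (Rabs a + 1))) as [z H1].
    { apply Rdiv_lt_0_compat; auto. pose proof (Rabs_pos a). lra. }
    exists (hscal X a z). rewrite HL2.
    replace (hsub (hscal X a x) (hscal X a (G z))) with (hscal X a (hsub x (G z))) by vext.
    rewrite norm_scal. pose proof (Rabs_pos a). pose proof (norm_nonneg X (hsub x (G z))).
    apply Rle_lt_trans with ((Rabs a + 1) * hnorm (hsub x (G z))). nra.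
    apply (Rmult_lt_compat_l (Rabs a + 1)) in H1; [|lra].
    replace ((Rabs a + 1) * (d / (Rabs a + 1))) with d in H1 by (field; lra). lra.
  - intros u l Vu Hl d Hd. destruct (Hl (d/2)) as [N HN]. lra.
    destruct (Vu N (d/2)) as [z Hz]. lra. exists z.
    eapply Rle_lt_trans. apply (norm_sub_triang X l (u N) (G z)).
    rewrite norm_sub_sym. pose proof (HN N (le_n N)). lra.
  - split; intros; reflexivity.
  - intros; reflexivity.
  - lra.
  - intros; lra.
  - intros; lra.
  - assert (Hxm : x = m).
    { assert (Horth : forall z, hinner X (hsub x m) (G z) = 0).
      { intro z. rewrite inner_sub_l, Hx; auto. ring. }
      pose proof (Horth (hsub x m)) as H. rewrite hinner_sym, HS, hinner_sym in H.
      apply add_cancel_zero. destruct (classic (hsub x m = hzero X)) as [E|E]; auto.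
      apply HP in E. unfold hsub in *. lra. }
    subst x. exact Vx.
Qed.

Lemma step2 (X : Hilbert) e T : 0 < e -> positive_op T -> forall m,
  let x := hscal X e (inv_op (Aop X e T) m) in
  hinner X x x <= hinner X m x /\ hnorm x <= hnorm m /\ T x = hscal X e (hsub m x).
Proof.
  intros He HT m x.
  pose proof (Aop_inv X e T He HT m) as Hy.
  set (y := inv_op (Aop X e T) m) in *. unfold Aop in Hy.
  pose proof HT as HT'. destruct HT' as [[[HL1 HL2] _] [HS HP]].
  assert (Hq : hinner X x x <= hinner X m x).
  { unfold x. rewrite <- Hy. inner_simpl. pose proof (pos_nonneg X T HT y).
    assert (e * (e * hinner X (T y) y) >= 0) by (apply Rle_ge; apply Rmult_le_pos; nra).
    nra. }
  split; [exact Hq|split].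
  - pose proof (CS_le X m x). rewrite <- norm_sq in Hq.
    pose proof (norm_nonneg X x). pose proof (norm_nonneg X m).
    destruct (Req_dec (hnorm x) 0) as [E|E]. lra.
    apply (Rmult_le_reg_l (hnorm x)). lra. nra.
  - unfold x. rewrite HL2. rewrite <- Hy at 1. vext.
Qed.

Lemma uniform (X : Hilbert) (l : list X) : forall f : nat -> X -> X,
  (forall n, is_linear X (f n)) ->
  (forall m, in_span X l m -> forall d, 0 < d -> exists N, forall n, (N <= n)%nat ->
       hnorm (f n m) < d) ->
  forall d, 0 < d -> exists N, forall n, (N <= n)%nat -> forall m, in_span X l m ->
       hnorm m <= 1 -> hnorm (f n m) <= d.
Proof.
  induction l as [|v l IH]; intros f Hlin Hpt d Hd.
  - exists 0%nat. intros n _ m Hm _. simpl in Hm. rewrite Hm, lin_zero by auto.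
    rewrite norm_zero. lra.
  - destruct (proj_exists X l v) as [p [Hp Op]].
    destruct (IH f Hlin (fun m Hm => Hpt m (span_cons X l v m Hm)) (d/2)) as [N1 HN1]. lra.
    set (w := hsub v p) in *.
    destruct (Req_dec (hinner X w w) 0) as [Hw|Hw].
    + exists N1. intros n Hn m [a [y [Hy ->]]] Hm1.
      apply Q_zero in Hw. assert (Hvp : v = p) by (apply add_cancel_zero; exact Hw).
      rewrite Hvp in *. pose proof (HN1 n Hn (hadd X (hscal X a p) y)) as H.
      assert (hnorm (f n (hadd X (hscal X a p) y)) <= d / 2); [|lra].
      apply H; auto. apply span_add; auto. apply span_scal; auto.
    + assert (Hwin : in_span X (v :: l) w).
      { simpl. exists 1, (hscal X (-1) p). split. apply span_scal; auto. unfold w. vext. }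
      assert (HQw : 0 < hinner X w w) by (pose proof (Q_nonneg X w); lra).
      assert (HNw : 0 < hnorm w).
      { unfold hnorm. apply sqrt_lt_R0. auto. }
      destruct (Hpt w Hwin (d / 2 * hnorm w)) as [N2 HN2]. nra.
      exists (max N1 N2). intros n Hn m [a [y [Hy ->]]] Hm1.
      assert (Hn1 : (N1 <= n)%nat) by (eapply Nat.le_trans; [apply Nat.le_max_l|exact Hn]).
      assert (Hn2 : (N2 <= n)%nat) by (eapply Nat.le_trans; [apply Nat.le_max_r|exact Hn]).
      set (q := hadd X (hscal X a p) y).
      assert (Hq : in_span X l q) by (apply span_add; auto; apply span_scal; auto).
      assert (Hdec : hadd X (hscal X a v) y = hadd X q (hscal X a w)) by (unfold q, w; vext).
      rewrite Hdec in *.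
      assert (Hwq : hinner X w q = 0) by (apply Op; auto).
      apply Q_le_of_norm in Hm1.
      assert (HQ : hinner X (hadd X q (hscal X a w)) (hadd X q (hscal X a w)) =
                   hinner X q q + a * a * hinner X w w).
      { inner_simpl. rewrite (hinner_sym X q w), Hwq. ring. }
      rewrite HQ in Hm1. pose proof (Q_nonneg X q).
      assert (0 <= a * a * hinner X w w) by (apply Rmult_le_pos; nra).
      assert (Hq1 : hnorm q <= 1) by (apply norm_le_of_sq; lra).
      assert (Ha : Rabs a * hnorm w <= 1).
      { rewrite <- norm_scal. apply norm_le_of_sq. lra. inner_simpl. lra. }
      rewrite (proj1 (Hlin n)), (proj2 (Hlin n)).
      eapply Rle_trans. apply norm_triang. rewrite norm_scal.
      pose proof (HN1 n Hn1 q Hq Hq1). pose proof (HN2 n Hn2).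
      pose proof (Rabs_pos a).
      assert (Rabs a * hnorm (f n w) <= Rabs a * (d / 2 * hnorm w)) by
        (apply Rmult_le_compat_l; lra).
      assert (Rabs a * (d / 2 * hnorm w) <= d / 2) by nra.
      lra.
Qed.

Lemma op_norm_bound (X : Hilbert) (T : X -> X) B :
  (forall h, hnorm h <= 1 -> hnorm (T h) <= B) -> 0 <= op_norm T <= B.
Proof.
  intro HB. unfold op_norm.
  set (S := fun r => exists h, hnorm h <= 1 /\ r = hnorm (T h)).
  assert (Hl : is_lub S (epsilon (inhabits 0) (is_lub S))).
  { apply epsilon_spec. destruct (completeness S) as [s Hs].
    - exists B. intros r [h [Hh ->]]. auto.
    - exists (hnorm (T (hzero X))). exists (hzero X). rewrite norm_zero. split; auto; lra.
    - exists s; auto. }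
  destruct Hl as [H1 H2]. split.
  - apply Rle_trans with (hnorm (T (hzero X))). apply norm_nonneg.
    apply H1. exists (hzero X). rewrite norm_zero. split; auto; lra.
  - apply H2. intros r [h [Hh ->]]. auto.
Qed.

Lemma pointwise (X : Hilbert) (G : X -> X) (Gam : R -> X -> X)
  (HG : positive_op G)
  (HGam : forall e, 0 < e -> positive_op (Gam e))
  (Hconv : forall h : X, forall d, 0 < d -> exists eta, 0 < eta /\
      forall e, 0 < e < eta -> hnorm (hsub (Gam e h) (G h)) < d)
  (eps : nat -> R) (Heps_pos : forall n, 0 < eps n) (Heps_lim : Un_cv eps 0) (m : X) :
  forall d, 0 < d -> exists N, forall n, (N <= n)%nat ->
    hnorm (hscal X (eps n) (inv_op (Aop X (eps n) (Gam (eps n))) m)) < d.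
Proof.
  intros d Hd.
  pose proof (norm_nonneg X m) as Hm0.
  set (B := hnorm m + 1).
  set (delta := d * d / (3 * B)).
  assert (Hdelta : 0 < delta) by (unfold delta, B; apply Rdiv_lt_0_compat; nra).
  destruct (density X G HG m delta Hdelta) as [z Hz].
  destruct (Hconv z delta Hdelta) as [eta [Heta Hc]].
  pose proof (norm_nonneg X z) as Hz0.
  set (tau := Rmin eta (delta / (2 * hnorm z + 1))).
  assert (Htau : 0 < tau).
  { apply Rmin_glb_lt; auto. apply Rdiv_lt_0_compat; lra. }
  destruct (Heps_lim tau Htau) as [N HN].
  exists N. intros n Hn.
  pose proof (HN n Hn) as Hen. unfold R_dist in Hen.
  pose proof (Heps_pos n) as He.
  set (e := eps n) in *.
  rewrite Rminus_0_r, Rabs_right in Hen by lra.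
  assert (Ht1 : tau <= eta) by apply Rmin_l.
  assert (Ht2 : tau <= delta / (2 * hnorm z + 1)) by apply Rmin_r.
  assert (He1 : e < eta) by lra.
  assert (He2 : e * (2 * hnorm z + 1) < delta).
  { apply (Rmult_lt_compat_r (2 * hnorm z + 1)) in Hen; [|lra].
    apply Rlt_le_trans with (tau * (2 * hnorm z + 1)); auto.
    apply Rle_trans with (delta / (2 * hnorm z + 1) * (2 * hnorm z + 1)).
    apply Rmult_le_compat_r; lra. right. field. lra. }
  destruct (step2 X e (Gam e) He (HGam e He) m) as [Hq [Hxm HTx]].
  set (x := hscal X e (inv_op (Aop X e (Gam e)) m)) in *.
  pose proof (norm_nonneg X x) as Hx0.
  assert (E : hinner X m x = hinner X (hsub m (G z)) x + hinner X (hsub (G z) (Gam e z)) x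
                + e * (hinner X z m - hinner X z x)).
  { destruct (HGam e He) as [_ [HS _]].
    replace (e * (hinner X z m - hinner X z x)) with (hinner X (Gam e z) x).
    inner_simpl. ring. rewrite HS, HTx. inner_simpl. ring. }
  assert (b1 : hinner X (hsub m (G z)) x <= delta * hnorm m).
  { eapply Rle_trans. apply CS_le. pose proof (norm_nonneg X (hsub m (G z))).
    apply Rle_trans with (delta * hnorm x). apply Rmult_le_compat_r; lra.
    apply Rmult_le_compat_l; lra. }
  assert (b2 : hinner X (hsub (G z) (Gam e z)) x <= delta * hnorm m).
  { eapply Rle_trans. apply CS_le. rewrite norm_sub_sym.
    pose proof (Hc e (conj He He1)). pose proof (norm_nonneg X (hsub (Gam e z) (G z))).
    apply Rle_trans with (delta * hnorm x). apply Rmult_le_compat_r; lra.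
    apply Rmult_le_compat_l; lra. }
  assert (b3 : e * (hinner X z m - hinner X z x) <= delta * hnorm m).
  { pose proof (CS_le X z m). pose proof (CS_abs X z x).
    pose proof (Rle_abs (- hinner X z x)). rewrite Rabs_Ropp in H1.
    assert (hinner X z m - hinner X z x <= 2 * hnorm z * hnorm m).
    { assert (hnorm z * hnorm x <= hnorm z * hnorm m) by (apply Rmult_le_compat_l; lra). lra. }
    apply Rle_trans with (e * (2 * hnorm z * hnorm m)). apply Rmult_le_compat_l; lra.
    assert (e * (2 * hnorm z) <= delta) by nra. nra. }
  apply norm_lt_of_sq. lra.
  assert (3 * delta * B = d * d) by (unfold delta, B; field; lra).
  unfold B in *. nra.
Qed.

Theorem theorem1 (X : Hilbert) (M : X -> Prop) (HM : fin_dim_subspace M)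
  (G : X -> X) (Gam : R -> X -> X)
  (HG : positive_op G)
  (HGam : forall e, 0 < e -> positive_op (Gam e))
  (Hconv : forall h : X, forall d, 0 < d -> exists eta, 0 < eta /\
      forall e, 0 < e < eta -> hnorm (hsub (Gam e h) (G h)) < d)
  (eps : nat -> R) (Heps_pos : forall n, 0 < eps n) (Heps_lim : Un_cv eps 0) :
  Un_cv (fun n => op_norm (fun h : X =>
           hscal X (eps n)
             (inv_op (fun x : X => hadd X (hscal X (eps n) x) (Gam (eps n) x))
                     (orth_proj M h)))) 0.
Proof.
  intros eps0 Heps0.
  pose proof HM as HM'. destruct HM' as [l Hl].
  set (f := fun n m => hscal X (eps n) (inv_op (Aop X (eps n) (Gam (eps n))) m)).
  assert (Hlin : forall n, is_linear X (f n)).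
  { intro n. pose proof (Heps_pos n) as He. pose proof (HGam _ He) as HT. unfold f. split.
    - intros x y. rewrite inv_add by auto. apply hscal_distr_l.
    - intros a x. rewrite inv_scal by auto. rewrite !hscal_assoc, Rmult_comm. reflexivity. }
  destruct (uniform X l f Hlin
     (fun m _ => pointwise X G Gam HG HGam Hconv eps Heps_pos Heps_lim m) (eps0 / 2))
     as [N HN]. lra.
  exists N. intros n Hn. unfold R_dist. rewrite Rminus_0_r.
  assert (H : 0 <= op_norm (fun h : X => f n (orth_proj M h)) <= eps0 / 2).
  { apply op_norm_bound. intros h Hh. apply HN; auto.
    - apply Hl. apply (orth_proj_spec X M HM h).
    - eapply Rle_trans. apply orth_proj_norm; auto. auto. }
  change (Rabs (op_norm (fun h : X => f n (orth_proj M h))) < eps0).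
  rewrite Rabs_right; lra.
Qed.
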